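(* Let $I$ be an irreducible numerical semigroup. Then (1) the height of the tree $\mathrm{G}([\theta(I),I])$ equals $\#(I\setminus\theta(I))$; (2) if $S$ belongs to the $n$-level of $\mathrm{G}([\theta(I),I])$, then $\mathrm{l}(S)=2n+\mathrm{l}(I)$; (3) $\{\mathrm{l}(S)\mid S\in[\theta(I),I]\}=\{2n+\mathrm{l}(I)\mid n\in\{0,1,\ldots,\#(I\setminus\theta(I))\}\}$.
   Context: A numerical semigroup is a subset $S\subseteq\mathbb{N}$ closed under addition with $0\in S$ and $\mathbb{N}\setminus S$ finite; $\mathrm{F}(S)=\max(\mathbb{Z}\setminus S)$; $\langle X\rangle$ is the submonoid generated by $X$. Irreducible: not the intersection of two numerical semigroups properly containing it. $\mathrm{N}(S)=\{s\in S\mid s<\mathrm{F}(S)\}$, $\mathrm{L}(S)=\{x\in\mathbb{N}\setminus S\mid \mathrm{F}(S)-x\notin \mathrm{N}(S)\}$, $\mathrm{l}(S)=\#\mathrm{L}(S)$. $\Delta(S)=\{s\in S\mid s<\frac{\mathrm{F}(S)}{2}\}$ and $\theta(S)=\langle\Delta(S)\rangle\cup\{\mathrm{F}(S)+1,\mathrm{F}(S)+2,\ldots\}$. For numerical semigroups $A\subseteq B$, $[A,B]$ is the set of numerical semigroups $X$ with $A\subseteq X\subseteq B$; $\mathrm{F}_B(X)=\max(B\setminus X)$ if $X\subsetneq B$, $\mathrm{F}_B(B)=-1$. $\mathrm{G}([A,B])$ has vertex set $[A,B]$ and an edge $(X,Y)$ whenever $X\cup\{\mathrm{F}_B(X)\}=Y$;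 it is a rooted tree with root $B$. The depth of a vertex is the number of edges on its unique path to the root, the $n$-level is the set of vertices of depth $n$, and the height is the maximal depth. *)

(* Defs.v *)
From Stdlib Require Import ClassicalEpsilon.
From HB Require Import structures.
From mathcomp Require Import all_boot all_order all_algebra.
Set Implicit Arguments. Unset Strict Implicit. Unset Printing Implicit Defensive.
Import Order.TTheory GRing.Theory Num.Theory.

Definition nset := nat -> Prop.

Definition inZ (S : nset) (z : int) : Prop :=
  match z with Posz n => S n | Negz _ => False end.

Definition subset (A B : nset) : Prop := forall x, A x -> B x.
Definition seteq (A B : nset) : Prop := forall x, A x <-> B x.
Definition psubset (A B : nset) : Prop := subset A B /\ exists x, B x /\ ~ A x.

Definition finite_set (A : nset) : Prop := exists s : seq nat, forall x, A x -> x \in s.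

Definition has_card (A : nset) (k : nat) : Prop :=
  exists s : seq nat, uniq s /\ (forall x, x \in s <-> A x) /\ size s = k.
(* #A (meaningful for finite A) *)
Definition ncard (A : nset) : nat := epsilon (inhabits 0%N) (has_card A).

Definition is_ns (S : nset) : Prop :=
  S 0%N /\ (forall x y, S x -> S y -> S (x + y)%N) /\ finite_set (fun n => ~ S n).

Definition frob (S : nset) : int :=
  epsilon (inhabits 0%R) (fun f : int => ~ inZ S f /\ forall z : int, (f < z)%R -> inZ S z).

Definition irreducible_ns (S : nset) : Prop :=
  is_ns S /\
  ~ (exists S1 S2, is_ns S1 /\ is_ns S2 /\ psubset S S1 /\ psubset S S2 /\
       seteq S (fun x => S1 x /\ S2 x)).

Inductive gen (X : nset) : nset :=
| gen0 : gen X 0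
| genS a x : X a -> gen X x -> gen X (a + x)%N.

Definition NS (S : nset) : nset := fun s => S s /\ (Posz s < frob S)%R.
Definition LS (S : nset) : nset :=
  fun x => ~ S x /\ ~ inZ (NS S) (frob S - Posz x)%R.
Definition lS (S : nset) : nat := ncard (LS S).

(* Delta(S) = {s in S | s < F(S)/2}, i.e. 2s < F(S) *)
Definition Delta (S : nset) : nset := fun s => S s /\ (Posz (2 * s)%N < frob S)%R.
Definition theta (S : nset) : nset :=
  fun x => gen (Delta S) x \/ (frob S < Posz x)%R.

Definition ns_interval (A B : nset) (X : nset) : Prop := is_ns X /\ subset A X /\ subset X B.

Definition frobB (B X : nset) : int :=
  epsilon (inhabits (-1)%R) (fun f : int =>
    (seteq X B /\ f = (-1)%R) \/
    (psubset X B /\ inZ B f /\ ~ inZ X f /\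
       forall z : int, (f < z)%R -> inZ B z -> inZ X z)).

(* depth B X n : the unique path from X to the root B in G([A,B]) has n edges,
   edges being (X, X ∪ {F_B(X)}) *)
Inductive depth (B : nset) : nset -> nat -> Prop :=
| depth_root X : seteq X B -> depth B X 0
| depth_step X Y n :
    psubset X B ->
    seteq Y (fun y => X y \/ Posz y = frobB B X) ->
    depth B Y n -> depth B X n.+1.

Definition level (A B : nset) (n : nat) : nset -> Prop :=
  fun X => ns_interval A B X /\ depth B X n.

Definition is_height (A B : nset) (h : nat) : Prop :=
  (exists X, level A B h X) /\
  (forall X d, ns_interval A B X -> depth B X d -> (d <= h)%N).

Definition setdiff (A B : nset) : nset := fun x => A x /\ ~ B x.

(* Main.v *)
Require Import Defs.
From Stdlib Require Import ClassicalEpsilon.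
From mathcomp Require Import all_boot all_order all_algebra zify.
Set Implicit Arguments. Unset Strict Implicit. Unset Printing Implicit Defensive.
Import Order.TTheory GRing.Theory Num.Theory.

Lemma hc_uniq A k1 k2 : has_card A k1 -> has_card A k2 -> k1 = k2.
Proof.
move=> [s1 [u1 [m1 <-]]] [s2 [u2 [m2 <-]]].
apply/eqP; rewrite eqn_leq; apply/andP; split; apply: uniq_leq_size => // x.
- by move/m1/m2.
- by move/m2/m1.
Qed.

Lemma ncard_eq A k : has_card A k -> ncard A = k.
Proof.
move=> H; apply: (hc_uniq _ H); unfold ncard.
by apply: epsilon_spec; exists k.
Qed.

Lemma hc_ext A B k : seteq A B -> has_card A k -> has_card B k.
Proof.
move=> E [s [u [m <-]]]; exists s; split=> //; split=> // x.
by rewrite m.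
Qed.

Lemma hc_add A k x : has_card A k -> ~ A x -> has_card (fun y => A y \/ y = x) k.+1.
Proof.
move=> [s [u [m <-]]] nx; exists (x :: s); split; [|split] => //=.
- rewrite u andbT; apply/negP => /m; exact: nx.
- move=> y; rewrite in_cons; split.
  + by case/orP => [/eqP -> | /m]; [right|left].
  + by case=> [/m -> | ->]; rewrite ?orbT ?eqxx.
Qed.

Lemma hc_rem A k x : has_card A k.+1 -> A x -> has_card (fun y => A y /\ y <> x) k.
Proof.
move=> [s [u [m sz]]] ax; have xs : x \in s by apply/m.
exists (rem x s); split; [exact: rem_uniq|split].
- move=> y; rewrite (mem_rem_uniq _ u) inE; split.
  + by case/andP => /eqP ne /m.
  + by case => /m -> /eqP ->.
- by rewrite size_rem // sz.
Qed.

Lemma hc_empty A : (forall x, ~ A x) -> has_card A 0.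
Proof. by move=> H; exists [::]; split=> //; split=> // x; split=> // /H. Qed.

Lemma hc_0 A x : has_card A 0 -> ~ A x.
Proof. by move=> [[|??] [u [m sz]]] // /m. Qed.

Lemma hc_ne A k : has_card A k.+1 -> exists x, A x.
Proof. by move=> [[|y s] [u [m sz]]] //; exists y; apply/m; rewrite inE eqxx. Qed.

Lemma hc_mono A B a b : Defs.subset A B -> has_card A a -> has_card B b -> (a <= b)%N.
Proof.
move=> sAB [s1 [u1 [m1 <-]]] [s2 [u2 [m2 <-]]].
apply: uniq_leq_size => // x /m1 /sAB /m2 //.
Qed.

Definition pb (P : Prop) : bool := if excluded_middle_informative P then true else false.
Lemma pbP (P : Prop) : pb P <-> P.
Proof. by rewrite /pb; case: excluded_middle_informative. Qed.

Lemma finite_card A : finite_set A -> exists k, has_card A k.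
Proof.
move=> [s Hs]; exists (size [seq x <- undup s | pb (A x)]).
exists [seq x <- undup s | pb (A x)]; split; [|split] => //.
- by rewrite filter_uniq // undup_uniq.
- move=> x; rewrite mem_filter mem_undup; split.
  + by case/andP => /pbP.
  + by move=> ax; rewrite (Hs _ ax) andbT; apply/pbP.
Qed.

Lemma finite_sub A B : Defs.subset A B -> finite_set B -> finite_set A.
Proof. by move=> sAB [s Hs]; exists s => x /sAB /Hs. Qed.

Lemma finite_bound A N : (forall n, A n -> (n < N)%N) -> finite_set A.
Proof. by move=> H; exists (iota 0 N) => x /H; rewrite mem_iota. Qed.

Lemma mem_le_sumn x s : x \in s -> (x <= sumn s)%N.
Proof.
elim: s => //= y s IH; rewrite in_cons => /orP [/eqP->|/IH]; lia.
Qed.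

Lemma finite_bound2 A : finite_set A -> exists N, forall n, A n -> (n < N)%N.
Proof.
move=> [s Hs]; exists (sumn s).+1 => n /Hs /mem_le_sumn; lia.
Qed.

Lemma max_ex (P : nat -> Prop) b n0 : (forall n, P n -> (n <= b)%N) -> P n0 ->
  exists m, P m /\ forall n, P n -> (n <= m)%N.
Proof.
move=> Hb; suff: forall c, (exists n, P n /\ (n <= c)%N) ->
   exists m, P m /\ forall n, P n -> (n <= c)%N -> (n <= m)%N.
  move=> H P0; have [m [Pm Hm]] := H b (ex_intro _ n0 (conj P0 (Hb _ P0))).
  by exists m; split=> // n Pn; apply: Hm => //; apply: Hb.
elim=> [|c IH].
- move=> [n [Pn le]]; exists n; split=> // k _; lia.
- move=> [n [Pn le]]; case: (excluded_middle_informative (P c.+1)) => Pc.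
  + by exists c.+1; split=> // k _.
  + have [|m [Pm Hm]] := IH.
      exists n; split=> //; case: (n =P c.+1) => [?|ne]; [by subst|lia].
    exists m; split=> // k Pk lek; apply: Hm => //.
    case: (k =P c.+1) => [?|ne]; [by subst|lia].
Qed.

Lemma hc_ext2 A B k : has_card A k -> seteq A B -> has_card B k.
Proof. by move=> H E; apply: hc_ext H. Qed.

Definition fspec (S : nset) (f : int) := ~ inZ S f /\ forall z : int, (f < z)%R -> inZ S z.

Lemma ns_bound S : is_ns S -> exists N, forall n, (N <= n)%N -> S n.
Proof.
move=> [_ [_ fin]]; have [N HN] := finite_bound2 fin.
exists N => n le; case: (excluded_middle_informative (S n)) => // /HN; lia.
Qed.

Lemma frob_ex S : is_ns S -> exists f, fspec S f.
Proof.
move=> /ns_bound [N HN]; elim: N HN => [|N IH] HN.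
- exists (Negz 0); split=> //= -[n|k] lt /=; [apply: HN|]; lia.
- case: (excluded_middle_informative (S N)) => SN.
  + apply: IH => n le; case: (n =P N) => [->//|ne]; apply: HN; lia.
  + exists (Posz N); split=> // -[n|k] lt /=; [apply: HN|]; lia.
Qed.

Lemma frob_spec S : is_ns S -> fspec S (frob S).
Proof. by move=> /frob_ex H; apply: epsilon_spec. Qed.

Lemma frob_eq S f : fspec S f -> frob S = f.
Proof.
move=> Hf; have [ng Hg] : fspec S (frob S) by apply: epsilon_spec; exists f.
case: Hf => nf Hf.
case: (ltgtP (frob S) f) => // lt; [by have := Hg _ lt | by have := Hf _ lt].
Qed.

Lemma frobB_spec B X : Defs.subset X B -> finite_set (setdiff B X) ->
  (exists x, B x /\ ~ X x) ->
  exists g, frobB B X = Posz g /\ B g /\ ~ X g /\ forall n, (g < n)%N -> B n -> X n.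
Proof.
move=> sXB fin [x [Bx nXx]].
have [N HN] := finite_bound2 fin.
have [m [[Bm nXm] Hm]] := max_ex (P := setdiff B X) (b := N)
   (fun n H => ltnW (HN n H)) (conj Bx nXx).
have : (seteq X B /\ frobB B X = (-1)%R) \/
    (psubset X B /\ inZ B (frobB B X) /\ ~ inZ X (frobB B X) /\
       forall z : int, (frobB B X < z)%R -> inZ B z -> inZ X z).
  apply: (epsilon_spec (inhabits (-1)%R) (fun f : int =>
    (seteq X B /\ f = (-1)%R) \/
    (psubset X B /\ inZ B f /\ ~ inZ X f /\
       forall z : int, (f < z)%R -> inZ B z -> inZ X z))).
  exists (Posz m); right; split; first by split=> //; exists x.
  split; first by []. split; first by [].
  move=> [n|k] //= lt Bn; case: (excluded_middle_informative (X n)) => // nXn.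
  have := Hm n (conj Bn nXn); rewrite ltz_nat in lt; lia.
case=> [[E _]|[_ [Bf [nXf Hf]]]]; first by case: nXx; apply/E.
move: Bf nXf Hf; case: (frobB B X) => [g|k] //= Bg nXg Hf.
exists g; split=> //; split=> //; split=> // n lt Bn.
by apply: (Hf (Posz n)) => //; rewrite ltz_nat.
Qed.

Lemma gen_add X x y : Defs.gen X x -> Defs.gen X y -> Defs.gen X (x + y)%N.
Proof.
elim=> [|a x' Xa _ IH] gy; first by rewrite add0n.
by rewrite -addnA; apply: genS => //; apply: IH.
Qed.

Lemma gen_sub X (S : nset) x : (forall a, X a -> S a) -> S 0 ->
  (forall x y, S x -> S y -> S (x + y)%N) -> Defs.gen X x -> S x.
Proof. by move=> HX S0 Sc; elim=> // a x' Xa _ IH; apply: Sc => //; apply: HX. Qed.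

Lemma ns_step B X g : is_ns B -> is_ns X -> Defs.subset X B -> B g -> ~ X g ->
  (forall n, (g < n)%N -> B n -> X n) -> is_ns (fun y => X y \/ y = g).
Proof.
move=> [B0 [Bc _]] [X0 [Xc Xf]] sXB Bg nXg Hg.
have g0 : (0 < g)%N by case: g nXg Bg Hg => //.
split; [by left|split].
- move=> x y [Xx|->] [Xy|->]; first (by left; apply: Xc).
  + case: x Xx => [|x] Xx; first by right; rewrite add0n.
    left; apply: Hg; [lia|by apply: Bc => //; apply: sXB].
  + case: y Xy => [|y] Xy; first by right; rewrite addn0.
    left; apply: Hg; [lia|by apply: Bc => //; apply: sXB].
  + left; apply: Hg; [lia|by apply: Bc].
- by apply: finite_sub Xf => n nY Xn; apply: nY; left.
Qed.

Lemma depth_card B X n : depth B X n -> Defs.subset X B -> finite_set (setdiff B X) ->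
  has_card (setdiff B X) n.
Proof.
elim=> {X n} [X E|X Y n [sXB [x [Bx nXx]]] EY _ IH] sXB' fin.
- by apply: hc_empty => x [Bx nXx]; apply/nXx/E.
- have [g [Eg [Bg [nXg Hg]]]] := frobB_spec sXB fin (ex_intro _ x (conj Bx nXx)).
  rewrite Eg in EY.
  have EY' : forall y, Y y <-> X y \/ y = g.
    by move=> y; rewrite EY; split=> -[?|H]; [left|right; case: H|left|right; rewrite H].
  have sYB : Defs.subset Y B by move=> y /EY' [/sXB|->].
  have finY : finite_set (setdiff B Y).
    by apply: finite_sub fin => y [By nYy]; split=> //; move=> Xy; apply: nYy; apply/EY'; left.
  apply: hc_ext (hc_add (IH sYB finY) (x := g) _).
  + move=> y; split.
    * case=> [[By nYy]|->]; split=> //; first by move=> Xy; apply: nYy; apply/EY'; left.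
    * move=> [By nXy]; case: (y =P g) => [->|ne]; [by right|left; split=> //].
      by move/EY' => [//|].
  + by move=> [_]; apply; apply/EY'; right.
Qed.

Lemma card_depth B n : forall X, Defs.subset X B -> has_card (setdiff B X) n -> depth B X n.
Proof.
elim: n => [|n IH] X sXB H.
- apply: depth_root => x; split; [exact: sXB|] => Bx.
  by case: (excluded_middle_informative (X x)) => // nXx; case: (hc_0 (x:=x) H).
- have [x [Bx nXx]] := hc_ne H.
  have fin : finite_set (setdiff B X) by case: H => s [_ [m _]]; exists s => y /m.
  have [g [Eg [Bg [nXg Hg]]]] := frobB_spec sXB fin (ex_intro _ x (conj Bx nXx)).
  apply: (depth_step (Y := fun y => X y \/ Posz y = frobB B X)).
  + by split=> //; exists x.
  + by [].
  + apply: IH.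
    * by move=> y [/sXB //|]; rewrite Eg => -[->].
    * apply: (hc_ext2 (hc_rem H (conj Bg nXg))) => y; rewrite Eg; split.
      - move=> [[By nXy] ne]; split=> //; case=> // -[]; done.
      - move=> [By nY]; split; [split=> //; move=> Xy; apply: nY; left|] => //.
        by move=> E; apply: nY; right; rewrite E.
Qed.

Lemma chain B n : forall X, is_ns B -> is_ns X -> Defs.subset X B -> has_card (setdiff B X) n ->
  forall k, (k <= n)%N -> exists Z, is_ns Z /\ Defs.subset X Z /\ Defs.subset Z B /\
     has_card (setdiff B Z) k.
Proof.
elim: n => [|n IH] X nsB nsX sXB H k le.
- have -> : k = 0 by lia.
  by exists X; split=> //; split=> // y.
- case: (k =P n.+1) => [->|ne]; first by exists X; split=> //; split=> // y.
  have [x [Bx nXx]] := hc_ne H.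
  have fin : finite_set (setdiff B X) by case: H => s [_ [m _]]; exists s => y /m.
  have [g [Eg [Bg [nXg Hg]]]] := frobB_spec sXB fin (ex_intro _ x (conj Bx nXx)).
  have nsY := ns_step nsB nsX sXB Bg nXg Hg.
  have [|||Z [nsZ [sYZ [sZB HZ]]]] := IH _ nsB nsY _ _ k _.
  + by move=> y [/sXB|->].
  + apply: (hc_ext2 (hc_rem H (conj Bg nXg))) => y; split.
    * move=> [[By nXy] ne']; split=> //; case=> //.
    * move=> [By nY]; split; [split=> //; move=> Xy; apply: nY; left|] => //.
      by move=> E; apply: nY; right.
  + lia.
  + exists Z; split=> //; split=> // y Xy; apply: sYZ; by left.
Qed.

Lemma theta_sub I : is_ns I -> Defs.subset (theta I) I.
Proof.
move=> nsI; have [_ hF] := frob_spec nsI.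
case: nsI => [I0 [Ic _]] x [g|lt]; last by apply: (hF (Posz x)).
by apply: (gen_sub (X := Delta I)) => // a [].
Qed.

Lemma theta_ns I : is_ns I -> is_ns (theta I).
Proof.
move=> nsI; have [nF hF] := frob_spec nsI.
have [N HN] := ns_bound nsI.
have FN : (frob I < Posz N)%R.
  move: nF; case: (frob I) => [m|k] /= nIm; last by lia.
  rewrite ltz_nat; case: (ltnP m N) => // le; by case: nIm; apply: HN.
split; [by left; constructor|split].
- move=> x y [gx|lx] [gy|ly]; [by left; apply: gen_add| | |]; right; lia.
- apply: (finite_bound (N := N)) => n nt.
  have : ~ (frob I < Posz n)%R by move=> lt; apply: nt; right.
  lia.
Qed.

Lemma frob_int I S : is_ns I -> ns_interval (theta I) I S -> frob S = frob I.
Proof.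
move=> nsI [nsS [sTS sSI]]; have [nF hF] := frob_spec nsI.
apply: frob_eq; split.
- by move: nF; case: (frob I) => [m|k] //= nIm /sSI.
- move=> [n|k] lt /=; first by apply: sTS; right.
  by have := hF _ lt.
Qed.

Definition L' (f : nat) (S : nset) : nset := fun x => (x <= f)%N /\ ~ S x /\ ~ S (f - x)%N.

Lemma LS_char I S f : is_ns I -> frob I = Posz f -> ns_interval (theta I) I S ->
  seteq (LS S) (L' f S).
Proof.
move=> nsI hf hS; have := frob_int nsI hS; rewrite hf => hfS.
have [nsS [sTS sSI]] := hS; have S0 := nsS.1.
move=> x; rewrite /LS /L' /NS hfS; split.
- move=> [nSx nN]; have xf : (x <= f)%N.
    case: (leqP x f) => // lt; case: nSx; apply: sTS; right; rewrite hf ltz_nat //.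
  split=> //; split=> // Sfx; apply: nN; rewrite subzn //=; split=> //.
  rewrite ltz_nat; case: x nSx xf {Sfx} => [|x] nSx xf; [by case: nSx|lia].
- move=> [xf [nSx nSfx]]; split=> //; rewrite subzn //= => -[]//.
Qed.

Lemma Lstep I f lI : is_ns I -> frob I = Posz f -> has_card (L' f I) lI ->
  forall k S, ns_interval (theta I) I S -> has_card (setdiff I S) k ->
  has_card (L' f S) (2 * k + lI)%N.
Proof.
move=> nsI hf hlI; have [nF _] := frob_spec nsI; rewrite hf /= in nF.
elim=> [|k IH] S [nsS [sTS sSI]] H.
- apply: hc_ext hlI => x; rewrite /L'.
  have E : forall y, S y <-> I y.
    move=> y; split; [exact: sSI|] => Iy.
    by case: (excluded_middle_informative (S y)) => // nSy; case: (hc_0 (x:=y) H).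
  by rewrite !E.
- have [x [Ix nSx]] := hc_ne H.
  have fin : finite_set (setdiff I S) by case: H => s [_ [m _]]; exists s => y /m.
  have [g [Eg [Ig [nSg Hg]]]] := frobB_spec sSI fin (ex_intro _ x (conj Ix nSx)).
  have nsY := ns_step nsI nsS sSI Ig nSg Hg.
  set Y := fun y => S y \/ y = g.
  have hY : ns_interval (theta I) I Y.
    split=> //; split; [by move=> y /sTS; left|by move=> y [/sSI|->]].
  have HY : has_card (setdiff I Y) k.
    apply: (hc_ext2 (hc_rem H (conj Ig nSg))) => y; split.
    * move=> [[By nXy] ne']; split=> //; case=> //.
    * move=> [By nY]; split; [split=> //; move=> Xy; apply: nY; left|] => //.
      by move=> E; apply: nY; right.
  have IHY := IH Y hY HY.
  have nTg : ~ theta I g by move/sTS.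
  have gf : (g <= f)%N.
    case: (leqP g f) => // lt; case: nTg; right; rewrite hf ltz_nat //.
  have fg : (f < 2 * g)%N.
    case: (ltnP f (2 * g)) => // le.
    case: (2 * g =P f)%N => [E|ne].
      by case: nF; rewrite -E mul2n -addnn; case: nsI => [_ [Ic _]]; apply: Ic.
    case: nTg; left; rewrite -[g]addn0; apply: genS; last by constructor.
    split=> //; rewrite hf ltz_nat; lia.
  have nIfg : ~ I (f - g)%N.
    move=> Ifg; apply: nF; rewrite -(subnKC gf).
    by case: nsI => [_ [Ic _]]; apply: Ic.
  have -> : (2 * k.+1 + lI = (2 * k + lI).+1.+1)%N by lia.
  apply: (hc_ext2 (hc_add (hc_add IHY (x := g) _) (x := (f - g)%N) _)).
  + by move=> [_ [nY _]]; apply: nY; right.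
  + case=> [[_ [_ nYf]]|E]; last by lia.
    by apply: nYf; right; rewrite subKn.
  + move=> y; rewrite /L' /Y; split.
    * case=> [[[yf [nY nYf]]|->]|->].
      -- split=> //; split=> H1; [apply: nY|apply: nYf]; by left.
      -- split=> //; split=> //; move/sSI; done.
      -- split; first lia. split; first by move/sSI.
         by rewrite subKn.
    * move=> [yf [nSy nSfy]].
      case: (y =P g) => [->|ney]; first by left; right.
      case: (y =P (f - g)%N) => [->|nefg]; first by right.
      left; left; split=> //; split.
      -- by case=> [//|E]; case: ney.
      -- case=> [//|E]; case: nefg; rewrite -E subKn //.
Qed.

Lemma seteq_sym A B : seteq A B -> seteq B A.
Proof. by move=> E x; rewrite E. Qed.

Lemma H_card I S k : is_ns I -> ns_interval (theta I) I S -> has_card (setdiff I S) k ->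
  lS S = (2 * k + lS I)%N.
Proof.
move=> nsI hS H; have [nF hF] := frob_spec nsI.
have hII : ns_interval (theta I) I I by split=> //; split; [exact: theta_sub|].
case E: (frob I) => [f|j].
- have [lI HlI] : exists lI, has_card (L' f I) lI.
    by apply: finite_card; apply: (finite_bound (N := f.+1)) => n [].
  rewrite /lS (ncard_eq (hc_ext (seteq_sym (LS_char nsI E hII)) HlI)).
  exact: ncard_eq (hc_ext (seteq_sym (LS_char nsI E hS)) (Lstep nsI E HlI hS H)).
- have allT : forall n, theta I n by move=> n; right; rewrite E; lia.
  have allS : forall n, S n by move=> n; apply: hS.2.1.
  have allI : forall n, I n by move=> n; apply: hS.2.2.
  have -> : k = 0 by apply: (hc_uniq H); apply: hc_empty => x [_ []].
  rewrite /lS !(@ncard_eq _ 0) //; apply: hc_empty => x [] //.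
Qed.

Theorem proposition32 (I : nset) (hI : irreducible_ns I) :
  is_height (theta I) I (ncard (setdiff I (theta I))) /\
  (forall (S : nset) (n : nat), level (theta I) I n S -> lS S = (2 * n + lS I)%N) /\
  (forall m : nat,
     (exists S, ns_interval (theta I) I S /\ lS S = m) <->
     (exists n : nat, (n <= ncard (setdiff I (theta I)))%N /\ m = (2 * n + lS I)%N)).
Proof.
have nsI := hI.1.
have nsT := theta_ns nsI.
have sTI := theta_sub nsI.
have hTT : ns_interval (theta I) I (theta I) by split=> //; split=> // x.
have finD : forall X, is_ns X -> finite_set (setdiff I X).
  by move=> X [_ [_ fX]]; apply: finite_sub fX => x [].
have [h Hh] := finite_card (finD _ nsT).
rewrite (ncard_eq Hh).
split; [split|split].
- by exists (theta I); split=> //; apply: card_depth.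
- move=> X d [nsX [sTX sXI]] dX.
  have := depth_card dX sXI (finD _ nsX) => Hd.
  by apply: (hc_mono _ Hd Hh) => x [Ix nXx]; split=> // /sTX.
- move=> S n [hS dS]; apply: H_card => //.
  by apply: depth_card dS hS.2.2 (finD _ hS.1).
- move=> m; split.
  + move=> [S [hS <-]]; have [k Hk] := finite_card (finD _ hS.1).
    exists k; split; last exact: H_card.
    by apply: (hc_mono _ Hk Hh) => x [Ix nXx]; split=> // /(hS.2.1).
  + move=> [n [le ->]].
    have [Z [nsZ [sTZ [sZI HZ]]]] := chain nsI nsT sTI Hh le.
    exists Z; split; first by split.
    exact: H_card.
Qed.
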